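(* Let $g,h\in\mathrm{PSL}(2,\mathbb{C})$ be non-commuting loxodromic elements. If $z_0$ is the midpoint of the shortest geodesic segment connecting the axes of $g$ and $h^{-1}gh$, then $d_g z_0<d_{hgh^{-1}}z_0$.
   Context: For an isometry $\gamma$ of hyperbolic 3-space $\mathbb{H}^3$ (with hyperbolic metric $\rho$) and $z\in\mathbb{H}^3$, $d_\gamma z=\rho(z,\gamma z)$. The axis of a loxodromic element is its translation axis in $\mathbb{H}^3$. *)

(* Defs.v *)
From Stdlib Require Import Reals.
From Coquelicot Require Import Coquelicot.
Open Scope R_scope.

(** Upper half-space model of hyperbolic 3-space:
    a point z + t j is represented by the pair (z, t) with z : C, t > 0. *)
Definition H3pt := (C * R)%type.
Definition inH3 (x : H3pt) : Prop := 0 < snd x.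

Definition cosh_rho (x y : H3pt) : R :=
  1 + ((Cmod (Cminus (fst x) (fst y)))^2 + (snd x - snd y)^2)
      / (2 * snd x * snd y).

Definition acosh (u : R) : R := ln (u + sqrt (u * u - 1)).

Definition rho (x y : H3pt) : R := acosh (cosh_rho x y).

(** 2x2 complex matrices; elements of PSL(2,C) are represented by
    matrices of SL(2,C) (determinant 1), modulo sign. *)
Record M2 := mkM2 { ma : C; mb : C; mc : C; md : C }.

Definition det (A : M2) : C := Cminus (Cmult (ma A) (md A)) (Cmult (mb A) (mc A)).
Definition SL2 (A : M2) : Prop := det A = RtoC 1.

Definition mmul (A B : M2) : M2 :=
  mkM2 (Cplus (Cmult (ma A) (ma B)) (Cmult (mb A) (mc B)))
       (Cplus (Cmult (ma A) (mb B)) (Cmult (mb A) (md B)))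
       (Cplus (Cmult (mc A) (ma B)) (Cmult (md A) (mc B)))
       (Cplus (Cmult (mc A) (mb B)) (Cmult (md A) (md B))).

Definition mopp (A : M2) : M2 := mkM2 (Copp (ma A)) (Copp (mb A)) (Copp (mc A)) (Copp (md A)).

(** Inverse of a determinant-one matrix. *)
Definition minv (A : M2) : M2 := mkM2 (md A) (Copp (mb A)) (Copp (mc A)) (ma A).

(** Commutation in PSL(2,C): AB = BA up to sign. *)
Definition pcommute (A B : M2) : Prop := mmul A B = mmul B A \/ mmul A B = mopp (mmul B A).

Definition trace (A : M2) : C := Cplus (ma A) (md A).

(** Loxodromic: tr^2 not in the real interval [0,4]
    (well defined on PSL(2,C) since tr^2 is sign-invariant). *)
Definition loxodromic (A : M2) : Prop :=
  let s := Cmult (trace A) (trace A) in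
  ~ (Im s = 0 /\ 0 <= Re s <= 4).

(** Action of A on the upper half-space (Poincare extension):
    A(z + t j) = [ (az+b) conj(cz+d) + a conj(c) t^2 + t j ] / (|cz+d|^2 + |c|^2 t^2). *)
Definition act (A : M2) (x : H3pt) : H3pt :=
  let z := fst x in let t := snd x in
  let w := Cplus (Cmult (mc A) z) (md A) in
  let den := (Cmod w)^2 + (Cmod (mc A))^2 * t^2 in
  (Cmult (RtoC (/ den))
     (Cplus (Cmult (Cplus (Cmult (ma A) z) (mb A)) (Cconj w))
            (Cmult (Cmult (ma A) (Cconj (mc A))) (RtoC (t^2)))),
   t / den).

Definition disp (A : M2) (x : H3pt) : R := rho x (act A x).

(** Translation axis of A: the set of points of H^3 where the displacement
    is minimal (for loxodromic A this is its axis geodesic). *)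
Definition axis (A : M2) (x : H3pt) : Prop :=
  inH3 x /\ forall w, inH3 w -> disp A x <= disp A w.

(* Main.v *)
Require Import Defs.
From Stdlib Require Import Reals Lra Psatz.
From Coquelicot Require Import Coquelicot.
Open Scope R_scope.

Open Scope R_scope.

Lemma Cmod2 (z : C) : Cmod z ^ 2 = fst z ^ 2 + snd z ^ 2.
Proof. unfold Cmod. rewrite pow2_sqrt; [ring|]. nra. Qed.

Definition n2 (z : C) := fst z ^ 2 + snd z ^ 2.

(* Hermitian representation *)
Definition hP (x : H3pt) := (n2 (fst x) + snd x ^ 2) / snd x.
Definition hQ (x : H3pt) := / snd x.
Definition hW (x : H3pt) : C := (fst (fst x) / snd x, snd (fst x) / snd x).

Definition HP (A : M2) (P Q : R) (w : C) : R :=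
  n2 (ma A) * P + 2 * fst (Cmult (Cmult (ma A) w) (Cconj (mb A))) + n2 (mb A) * Q.
Definition HQ (A : M2) (P Q : R) (w : C) : R :=
  n2 (mc A) * P + 2 * fst (Cmult (Cmult (mc A) w) (Cconj (md A))) + n2 (md A) * Q.
Definition HW (A : M2) (P Q : R) (w : C) : C :=
  Cplus (Cplus (Cmult (RtoC P) (Cmult (ma A) (Cconj (mc A))))
               (Cmult (Cmult (ma A) w) (Cconj (md A))))
        (Cplus (Cmult (Cmult (mb A) (Cconj w)) (Cconj (mc A)))
               (Cmult (RtoC Q) (Cmult (mb A) (Cconj (md A))))).

Lemma sq_pos (x : R) : x <> 0 -> 0 < x ^ 2.
Proof. intro H. assert (0 < x * x) by (apply Rsqr_pos_lt; exact H). nra. Qed.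

Ltac csimpl := unfold Cminus, Cplus, Cmult, Copp, Cconj, RtoC, n2, Re, Im in *; cbn [fst snd ma mb mc md] in *.

Lemma den_pos (A : M2) (x : H3pt) : SL2 A -> inH3 x ->
  0 < Cmod (Cplus (Cmult (mc A) (fst x)) (md A)) ^ 2 + Cmod (mc A) ^ 2 * snd x ^ 2.
Proof.
  destruct A as [[a1 a2] [b1 b2] [c1 c2] [d1 d2]]; destruct x as [[z1 z2] t].
  unfold SL2, det, inH3; rewrite !Cmod2; csimpl. intros H Ht.
  injection H; intros H2 H1; clear H.
  pose proof (pow2_ge_0 (c1 * z1 - c2 * z2 + d1)).
  pose proof (pow2_ge_0 (c1 * z2 + c2 * z1 + d2)).
  destruct (Req_dec c1 0) as [Hc1|Hc1]; destruct (Req_dec c2 0) as [Hc2|Hc2].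
  - subst. assert (Hd : d1 <> 0 \/ d2 <> 0).
    { destruct (Req_dec d1 0); destruct (Req_dec d2 0); subst; try (left; assumption); try (right; assumption). nra. }
    destruct Hd as [Hd|Hd]; pose proof (sq_pos _ Hd); nra.
  - assert (0 < (c1 ^ 2 + c2 ^ 2) * t ^ 2).
    { apply Rmult_lt_0_compat. pose proof (sq_pos _ Hc2). nra. nra. }
    nra.
  - assert (0 < (c1 ^ 2 + c2 ^ 2) * t ^ 2).
    { apply Rmult_lt_0_compat. pose proof (sq_pos _ Hc1). nra. nra. }
    nra.
  - assert (0 < (c1 ^ 2 + c2 ^ 2) * t ^ 2).
    { apply Rmult_lt_0_compat. pose proof (sq_pos _ Hc1). nra. nra. }
    nra.
Qed.

Lemma rep_act_QW (A : M2) (x : H3pt) : SL2 A -> inH3 x ->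
  hQ (act A x) = HQ A (hP x) (hQ x) (hW x) /\ hW (act A x) = HW A (hP x) (hQ x) (hW x).
Proof.
  intros HA Hx. pose proof (den_pos A x HA Hx) as Hd.
  destruct A as [[a1 a2] [b1 b2] [c1 c2] [d1 d2]]; destruct x as [[z1 z2] t].
  unfold inH3 in Hx; simpl in Hx.
  unfold act, hQ, hP, hW, HQ, HW in *; rewrite !Cmod2 in *; csimpl.
  split; [|f_equal]; field; lra.
Qed.

Lemma rep_act_P (A : M2) (x : H3pt) : SL2 A -> inH3 x ->
  hP (act A x) = HP A (hP x) (hQ x) (hW x).
Proof.
  intros HA Hx. pose proof (den_pos A x HA Hx) as Hd.
  destruct A as [[a1 a2] [b1 b2] [c1 c2] [d1 d2]]; destruct x as [[z1 z2] t].
  unfold inH3 in Hx; simpl in Hx.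
  unfold SL2, det in HA.
  unfold act, hQ, hP, hW, HP in *; rewrite !Cmod2 in *; csimpl.
  injection HA; intros H2 H1; clear HA.
  set (u1 := a1 * z1 - a2 * z2 + b1). set (u2 := a1 * z2 + a2 * z1 + b2).
  set (v1 := c1 * z1 - c2 * z2 + d1). set (v2 := c1 * z2 + c2 * z1 + d2).
  set (den := v1 ^ 2 + v2 ^ 2 + (c1 ^ 2 + c2 ^ 2) * t ^ 2) in *.
  assert (KI : (u1 * v1 + u2 * v2 + (a1 * c1 + a2 * c2) * t ^ 2) ^ 2
             + (u2 * v1 - u1 * v2 + (a2 * c1 - a1 * c2) * t ^ 2) ^ 2 + t ^ 2
             = (u1 ^ 2 + u2 ^ 2 + (a1 ^ 2 + a2 ^ 2) * t ^ 2) * den).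
  { replace (t ^ 2) with (t ^ 2 * ((a1 * d1 - a2 * d2 + - (b1 * c1 - b2 * c2)) ^ 2
                         + (a1 * d2 + a2 * d1 + - (b1 * c2 + b2 * c1)) ^ 2)) at 3
      by (rewrite H1, H2; ring).
    unfold den, u1, u2, v1, v2; ring. }
  transitivity (((u1 * v1 + u2 * v2 + (a1 * c1 + a2 * c2) * t ^ 2) ^ 2
             + (u2 * v1 - u1 * v2 + (a2 * c1 - a1 * c2) * t ^ 2) ^ 2 + t ^ 2) / (den * t)).
  { unfold u1, u2, v1, v2 in *. field. split; apply Rgt_not_eq; unfold den; lra. }
  rewrite KI. unfold u1, u2, v1, v2 in *. field. split; apply Rgt_not_eq; unfold den; lra.
Qed.

Lemma act_H3 (A : M2) (x : H3pt) : SL2 A -> inH3 x -> inH3 (act A x).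
Proof.
  intros HA Hx. pose proof (den_pos A x HA Hx). unfold inH3, act in *. simpl.
  apply Rdiv_lt_0_compat; assumption.
Qed.

Lemma rep_inj (x y : H3pt) : inH3 x -> inH3 y -> hQ x = hQ y -> hW x = hW y -> x = y.
Proof.
  destruct x as [[z1 z2] t]; destruct y as [[w1 w2] s]. unfold inH3, hQ, hW; simpl.
  intros Ht Hs HQ HW. injection HW; intros E2 E1.
  assert (t = s). { rewrite <- (Rinv_inv t), <- (Rinv_inv s), HQ. reflexivity. }
  subst s. f_equal. f_equal.
  - apply (Rmult_eq_reg_r (/ t)). exact E1. apply Rgt_not_eq. apply Rinv_0_lt_compat. exact Ht.
  - apply (Rmult_eq_reg_r (/ t)). exact E2. apply Rgt_not_eq. apply Rinv_0_lt_compat. exact Ht.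
Qed.

Lemma HQ_comp (A B : M2) P Q w :
  HQ (mmul A B) P Q w = HQ A (HP B P Q w) (HQ B P Q w) (HW B P Q w).
Proof.
  destruct A as [[a1 a2] [b1 b2] [c1 c2] [d1 d2]]; destruct B as [[e1 e2] [f1 f2] [g1 g2] [h1 h2]];
  destruct w as [w1 w2]. unfold HQ, HP, HW, mmul. csimpl. ring.
Qed.

Lemma HW_comp (A B : M2) P Q w :
  HW (mmul A B) P Q w = HW A (HP B P Q w) (HQ B P Q w) (HW B P Q w).
Proof.
  destruct A as [[a1 a2] [b1 b2] [c1 c2] [d1 d2]]; destruct B as [[e1 e2] [f1 f2] [g1 g2] [h1 h2]];
  destruct w as [w1 w2]. unfold HQ, HP, HW, mmul. csimpl. f_equal; ring.
Qed.

Lemma SL2_mul (A B : M2) : SL2 A -> SL2 B -> SL2 (mmul A B).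
Proof.
  destruct A as [[a1 a2] [b1 b2] [c1 c2] [d1 d2]]; destruct B as [[e1 e2] [f1 f2] [g1 g2] [h1 h2]].
  unfold SL2, det, mmul. csimpl. intros HA HB.
  injection HA; intros A2 A1; injection HB; intros B2 B1; clear HA HB.
  f_equal.
  - transitivity ((a1 * d1 - a2 * d2 + - (b1 * c1 - b2 * c2)) * (e1 * h1 - e2 * h2 + - (f1 * g1 - f2 * g2))
      - (a1 * d2 + a2 * d1 + - (b1 * c2 + b2 * c1)) * (e1 * h2 + e2 * h1 + - (f1 * g2 + f2 * g1))).
    ring. rewrite A1, A2, B1, B2. ring.
  - transitivity ((a1 * d1 - a2 * d2 + - (b1 * c1 - b2 * c2)) * (e1 * h2 + e2 * h1 + - (f1 * g2 + f2 * g1))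
      + (a1 * d2 + a2 * d1 + - (b1 * c2 + b2 * c1)) * (e1 * h1 - e2 * h2 + - (f1 * g1 - f2 * g2))).
    ring. rewrite A1, A2, B1, B2. ring.
Qed.

Lemma act_comp (A B : M2) (x : H3pt) : SL2 A -> SL2 B -> inH3 x ->
  act (mmul A B) x = act A (act B x).
Proof.
  intros HA HB Hx.
  pose proof (act_H3 B x HB Hx) as HBx.
  apply rep_inj.
  - apply act_H3; [apply SL2_mul|]; assumption.
  - apply act_H3; assumption.
  - rewrite (proj1 (rep_act_QW _ _ (SL2_mul A B HA HB) Hx)).
    rewrite (proj1 (rep_act_QW _ _ HA HBx)).
    rewrite (proj1 (rep_act_QW _ _ HB Hx)), (proj2 (rep_act_QW _ _ HB Hx)), (rep_act_P _ _ HB Hx).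
    apply HQ_comp.
  - rewrite (proj2 (rep_act_QW _ _ (SL2_mul A B HA HB) Hx)).
    rewrite (proj2 (rep_act_QW _ _ HA HBx)).
    rewrite (proj1 (rep_act_QW _ _ HB Hx)), (proj2 (rep_act_QW _ _ HB Hx)), (rep_act_P _ _ HB Hx).
    apply HW_comp.
Qed.

Definition Bf (P Q : R) (w : C) (P' Q' : R) (w' : C) : R :=
  (P * Q' + Q * P') / 2 - (fst w * fst w' + snd w * snd w').

Lemma cosh_rho_Bf (x y : H3pt) : inH3 x -> inH3 y ->
  cosh_rho x y = Bf (hP x) (hQ x) (hW x) (hP y) (hQ y) (hW y).
Proof.
  destruct x as [[z1 z2] t]; destruct y as [[w1 w2] s]. unfold inH3, cosh_rho, Bf, hP, hQ, hW.
  rewrite !Cmod2. csimpl. intros Ht Hs. field. split; apply Rgt_not_eq; lra.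
Qed.

Lemma Bf_inv (A : M2) P Q w P' Q' w' :
  Bf (HP A P Q w) (HQ A P Q w) (HW A P Q w) (HP A P' Q' w') (HQ A P' Q' w') (HW A P' Q' w')
  = (n2 (det A)) * Bf P Q w P' Q' w'.
Proof.
  destruct A as [[a1 a2] [b1 b2] [c1 c2] [d1 d2]];
  destruct w as [w1 w2]; destruct w' as [v1 v2]. unfold Bf, HQ, HP, HW, det. csimpl. field.
Qed.

Lemma cosh_rho_inv (A : M2) (x y : H3pt) : SL2 A -> inH3 x -> inH3 y ->
  cosh_rho (act A x) (act A y) = cosh_rho x y.
Proof.
  intros HA Hx Hy.
  rewrite cosh_rho_Bf by (apply act_H3; assumption).
  rewrite (proj1 (rep_act_QW _ _ HA Hx)), (proj2 (rep_act_QW _ _ HA Hx)), (rep_act_P _ _ HA Hx).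
  rewrite (proj1 (rep_act_QW _ _ HA Hy)), (proj2 (rep_act_QW _ _ HA Hy)), (rep_act_P _ _ HA Hy).
  rewrite Bf_inv. unfold SL2 in HA. rewrite HA. rewrite cosh_rho_Bf by assumption.
  unfold n2; simpl; ring.
Qed.

Lemma rho_inv (A : M2) (x y : H3pt) : SL2 A -> inH3 x -> inH3 y ->
  rho (act A x) (act A y) = rho x y.
Proof. intros. unfold rho. rewrite cosh_rho_inv; auto. Qed.

Definition I2 : M2 := mkM2 (RtoC 1) (RtoC 0) (RtoC 0) (RtoC 1).

Lemma act_I2 (x : H3pt) : inH3 x -> act I2 x = x.
Proof.
  destruct x as [[z1 z2] t]. unfold inH3, act, I2. rewrite !Cmod2. csimpl. intros Ht.
  f_equal; [f_equal|]; field.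
Qed.

Lemma SL2_minv (A : M2) : SL2 A -> SL2 (minv A).
Proof.
  destruct A as [[a1 a2] [b1 b2] [c1 c2] [d1 d2]]. unfold SL2, det, minv. csimpl.
  intro H. rewrite <- H. f_equal; ring.
Qed.

Lemma minv_l (A : M2) : SL2 A -> mmul (minv A) A = I2.
Proof.
  destruct A as [[a1 a2] [b1 b2] [c1 c2] [d1 d2]]. unfold SL2, det, minv, mmul, I2. csimpl.
  intro H. injection H; intros H2 H1; clear H.
  f_equal; f_equal; try ring; [rewrite <- H1 | rewrite <- H2 | rewrite <- H1 | rewrite <- H2]; ring.
Qed.

Lemma minv_r (A : M2) : SL2 A -> mmul A (minv A) = I2.
Proof.
  destruct A as [[a1 a2] [b1 b2] [c1 c2] [d1 d2]]. unfold SL2, det, minv, mmul, I2. csimpl.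
  intro H. injection H; intros H2 H1; clear H.
  f_equal; f_equal; try ring; [rewrite <- H1 | rewrite <- H2 | rewrite <- H1 | rewrite <- H2]; ring.
Qed.

Lemma act_inv_l (A : M2) (x : H3pt) : SL2 A -> inH3 x -> act (minv A) (act A x) = x.
Proof.
  intros HA Hx. rewrite <- act_comp; auto using SL2_minv. rewrite minv_l; auto. apply act_I2; auto.
Qed.

Lemma act_inv_r (A : M2) (x : H3pt) : SL2 A -> inH3 x -> act A (act (minv A) x) = x.
Proof.
  intros HA Hx. rewrite <- act_comp; auto using SL2_minv. rewrite minv_r; auto. apply act_I2; auto.
Qed.

Lemma mmul_assoc (A B D : M2) : mmul A (mmul B D) = mmul (mmul A B) D.
Proof.
  destruct A as [[a1 a2] [b1 b2] [c1 c2] [d1 d2]]; destruct B as [[e1 e2] [f1 f2] [g1 g2] [h1 h2]];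
  destruct D as [[k1 k2] [l1 l2] [m1 m2] [n1 n2]]. unfold mmul. csimpl. f_equal; f_equal; ring.
Qed.

Open Scope R_scope.

Lemma acosh_lt (u v : R) : 1 <= u -> u < v -> acosh u < acosh v.
Proof.
  intros Hu Huv. unfold acosh. apply ln_increasing.
  - pose proof (sqrt_pos (u * u - 1)). lra.
  - assert (sqrt (u * u - 1) <= sqrt (v * v - 1)) by (apply sqrt_le_1_alt; nra). lra.
Qed.

Lemma acosh_le (u v : R) : 1 <= u -> u <= v -> acosh u <= acosh v.
Proof.
  intros Hu Huv. destruct (Req_dec u v). subst; lra. left; apply acosh_lt; lra.
Qed.

Lemma acosh_le_inv (u v : R) : 1 <= u -> 1 <= v -> acosh u <= acosh v -> u <= v.
Proof.
  intros Hu Hv H. destruct (Rle_or_lt u v); auto. pose proof (acosh_lt v u Hv H0). lra.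
Qed.

Lemma acosh_lt_inv (u v : R) : 1 <= u -> 1 <= v -> acosh u < acosh v -> u < v.
Proof.
  intros Hu Hv H. destruct (Rlt_or_le u v); auto. pose proof (acosh_le v u Hv H0). lra.
Qed.

Lemma acosh_exp (u : R) : 1 <= u -> exp (acosh u) = u + sqrt (u * u - 1).
Proof. intros Hu. unfold acosh. apply exp_ln. pose proof (sqrt_pos (u * u - 1)). lra. Qed.

Lemma acosh_exp_inv (u : R) : 1 <= u -> u = (exp (acosh u) + / exp (acosh u)) / 2.
Proof.
  intros Hu. rewrite acosh_exp by auto.
  pose proof (sqrt_pos (u * u - 1)) as Hs.
  assert (Hss : sqrt (u * u - 1) * sqrt (u * u - 1) = u * u - 1) by (apply sqrt_sqrt; nra).
  assert (/ (u + sqrt (u * u - 1)) = u - sqrt (u * u - 1)).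
  { field_simplify_eq. nra. apply Rgt_not_eq; lra. }
  rewrite H. field.
Qed.

Lemma acosh_double (u w : R) : 1 <= u -> 1 <= w -> acosh w = 2 * acosh u -> w = 2 * u ^ 2 - 1.
Proof.
  intros Hu Hw H.
  rewrite (acosh_exp_inv w Hw), (acosh_exp_inv u Hu), H.
  replace (2 * acosh u) with (acosh u + acosh u) by ring. rewrite exp_plus.
  pose proof (exp_pos (acosh u)). field. apply Rgt_not_eq; lra.
Qed.

Lemma cosh_rho_ge1 (x y : H3pt) : inH3 x -> inH3 y -> 1 <= cosh_rho x y.
Proof.
  intros Hx Hy. unfold cosh_rho, inH3 in *.
  pose proof (pow2_ge_0 (Cmod (Cminus (fst x) (fst y)))). pose proof (pow2_ge_0 (snd x - snd y)).
  assert (0 <= (Cmod (Cminus (fst x) (fst y)))^2 + (snd x - snd y)^2) by lra.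
  assert (0 < 2 * snd x * snd y) by nra.
  assert (0 <= ((Cmod (Cminus (fst x) (fst y)))^2 + (snd x - snd y)^2) / (2 * snd x * snd y))
    by (apply Rdiv_le_0_compat; lra). lra.
Qed.

Lemma cosh_rho_sym (x y : H3pt) : cosh_rho x y = cosh_rho y x.
Proof.
  destruct x as [[z1 z2] t]; destruct y as [[w1 w2] s]. unfold cosh_rho. rewrite !Cmod2. csimpl.
  f_equal. f_equal; [ring|]. ring.
Qed.

Lemma rho_sym (x y : H3pt) : rho x y = rho y x.
Proof. unfold rho. rewrite cosh_rho_sym. reflexivity. Qed.

Open Scope R_scope.

Definition nu (x : H3pt) : R := n2 (fst x) / snd x ^ 2.
Definition Vpt (s : R) : H3pt := (RtoC 0, s).

Lemma nu_ge0 (x : H3pt) : inH3 x -> 0 <= nu x.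
Proof.
  intros Hx. unfold nu, n2, inH3 in *. apply Rdiv_le_0_compat; [|nra].
  pose proof (pow2_ge_0 (fst (fst x))); pose proof (pow2_ge_0 (snd (fst x))); lra.
Qed.

Lemma V3 (x : H3pt) (s : R) : inH3 x -> 0 < s ->
  0 <= cosh_rho x (Vpt s) /\ 1 + nu x <= cosh_rho x (Vpt s) ^ 2.
Proof.
  destruct x as [[z1 z2] t]. unfold inH3, nu, Vpt, cosh_rho. rewrite !Cmod2. csimpl. intros Ht Hs.
  set (S := z1 ^ 2 + z2 ^ 2 + t ^ 2).
  assert (E : 1 + ((z1 + - 0) ^ 2 + (z2 + - 0) ^ 2 + (t - s) ^ 2) / (2 * t * s) = (S + s^2) / (2 * t * s)).
  { unfold S. field. split; apply Rgt_not_eq; lra. }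
  rewrite E.
  assert (HS : t ^ 2 <= S) by (unfold S; nra).
  assert (0 < 2 * t * s) by nra.
  split. apply Rdiv_le_0_compat; nra.
  replace (1 + (z1 ^ 2 + z2 ^ 2) / t ^ 2) with (S / t ^ 2) by (unfold S; field; apply Rgt_not_eq; lra).
  replace (((S + s ^ 2) / (2 * t * s)) ^ 2) with ((S + s^2)^2 / (2 * t * s) ^ 2) by (field; split; apply Rgt_not_eq; lra).
  assert (D : (S + s^2)^2 / (2 * t * s) ^ 2 - S / t ^ 2 = (S - s ^ 2) ^ 2 / (4 * t^2 * s^2)).
  { field. split; apply Rgt_not_eq; lra. }
  assert (0 <= (S - s ^ 2) ^ 2 / (4 * t^2 * s^2)).
  { apply Rdiv_le_0_compat. apply pow2_ge_0. assert (0 < t^2) by nra. assert (0 < s^2) by nra. nra. }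
  lra.
Qed.

Definition foot (x : H3pt) : H3pt := Vpt (sqrt (n2 (fst x) + snd x ^ 2)).

Lemma foot_spec (x : H3pt) : inH3 x ->
  inH3 (foot x) /\ fst (foot x) = RtoC 0 /\ 0 <= cosh_rho x (foot x) /\ cosh_rho x (foot x) ^ 2 = 1 + nu x.
Proof.
  intros Hx. destruct x as [[z1 z2] t]. unfold inH3 in *. simpl in Hx.
  assert (HS : 0 < n2 (z1, z2) + t ^ 2) by (unfold n2; simpl; nra).
  pose proof (sqrt_lt_R0 _ HS) as Hs.
  assert (Hss : sqrt (n2 (z1, z2) + t ^ 2) ^ 2 = n2 (z1, z2) + t ^ 2) by (apply pow2_sqrt; lra).
  set (s := sqrt (n2 (z1, z2) + t ^ 2)) in *.
  split; [unfold foot, Vpt, inH3; simpl; exact Hs|].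
  split; [reflexivity|].
  split; [apply (V3 ((z1, z2), t) s); simpl; auto|].
  unfold foot, Vpt, cosh_rho, nu. fold s. rewrite !Cmod2. unfold n2 in *. csimpl.
  assert (E : 1 + ((z1 + - 0) ^ 2 + (z2 + - 0) ^ 2 + (t - s) ^ 2) / (2 * t * s) = s / t).
  { field_simplify_eq; [|split; apply Rgt_not_eq; lra]. nra. }
  fold s. rewrite E. field_simplify_eq; [|apply Rgt_not_eq; lra]. nra.
Qed.

Definition Cinv' (l : C) : C := (fst l / n2 l, - snd l / n2 l).
Definition dg (l : C) : M2 := mkM2 l (RtoC 0) (RtoC 0) (Cinv' l).
Definition K0 (l : C) : R := 1 + (n2 l - 1) ^ 2 / (2 * n2 l).
Definition K1 (l : C) : R := n2 (Cminus (Cmult l l) (RtoC 1)) / (2 * n2 l).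

Lemma G_formula (l : C) (x : H3pt) : 0 < n2 l -> inH3 x ->
  cosh_rho x (act (dg l) x) = K0 l + K1 l * nu x.
Proof.
  destruct l as [l1 l2]; destruct x as [[z1 z2] t]. unfold inH3, n2; simpl. intros Hl Ht.
  unfold cosh_rho, act, dg, K0, K1, nu, Cinv'. rewrite !Cmod2. unfold n2. csimpl.
  field. repeat split; apply Rgt_not_eq; try lra.
Qed.

Lemma n2_pos (z : C) : z <> RtoC 0 -> 0 < n2 z.
Proof.
  destruct z as [a b]. unfold n2, RtoC; simpl. intros H.
  destruct (Req_dec a 0); destruct (Req_dec b 0); subst.
  - exfalso; apply H; reflexivity.
  - pose proof (sq_pos b H1). nra.
  - pose proof (sq_pos a H0). nra.
  - pose proof (sq_pos a H0). nra.
Qed.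

Lemma n2_zero (z : C) : n2 z <= 0 -> z = RtoC 0.
Proof.
  intros H. destruct (Ceq_dec z (RtoC 0)); auto. pose proof (n2_pos z n). lra.
Qed.

Lemma K1_pos (l : C) : 0 < n2 l -> Cmult l l <> RtoC 1 -> 0 < K1 l.
Proof.
  intros Hl Hll. unfold K1. apply Rdiv_lt_0_compat; [|lra].
  apply n2_pos. intro E. apply Hll. destruct l as [l1 l2]. unfold RtoC in *. csimpl.
  injection E; intros E2 E1. f_equal; lra.
Qed.

Lemma disp_dg (l : C) (x : H3pt) : 0 < n2 l -> inH3 x -> disp (dg l) x = acosh (K0 l + K1 l * nu x).
Proof. intros. unfold disp, rho. rewrite G_formula; auto. Qed.

Lemma SL2_dg (l : C) : 0 < n2 l -> SL2 (dg l).
Proof.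
  destruct l as [l1 l2]. unfold SL2, det, dg, Cinv', n2; simpl. intros Hl. csimpl.
  f_equal; field; apply Rgt_not_eq; lra.
Qed.

Lemma KG_ge1 (l : C) (x : H3pt) : 0 < n2 l -> inH3 x -> 1 <= K0 l + K1 l * nu x.
Proof.
  intros Hl Hx. rewrite <- G_formula; auto. apply cosh_rho_ge1; auto. apply act_H3; auto. apply SL2_dg; auto.
Qed.

Lemma nu_zero (x : H3pt) : fst x = RtoC 0 -> nu x = 0.
Proof. intros H. unfold nu. rewrite H. unfold n2; simpl. unfold Rdiv; ring. Qed.

Lemma disp_dg_lt (l : C) (x y : H3pt) : 0 < n2 l -> Cmult l l <> RtoC 1 -> inH3 x -> inH3 y ->
  nu x < nu y -> disp (dg l) x < disp (dg l) y.
Proof.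
  intros Hl Hll Hx Hy H. rewrite !disp_dg; auto. apply acosh_lt. apply KG_ge1; auto.
  pose proof (K1_pos l Hl Hll). nra.
Qed.

Lemma axis_dg (l : C) (x : H3pt) : 0 < n2 l -> Cmult l l <> RtoC 1 ->
  axis (dg l) x <-> inH3 x /\ fst x = RtoC 0.
Proof.
  intros Hl Hll. split.
  - intros [Hx Hmin]. split; auto.
    assert (H1 : inH3 (Vpt 1)) by (unfold inH3, Vpt; simpl; lra).
    specialize (Hmin _ H1). rewrite !disp_dg in Hmin; auto.
    apply acosh_le_inv in Hmin; try apply KG_ge1; auto.
    rewrite (nu_zero (Vpt 1)) in Hmin by reflexivity.
    pose proof (K1_pos l Hl Hll).
    assert (nu x <= 0) by nra.
    apply n2_zero. unfold nu in H0. destruct x as [z t]; unfold inH3 in Hx; simpl in *.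
    assert (0 < t ^ 2) by nra.
    apply (Rmult_le_compat_r (t ^ 2)) in H0; [|lra]. field_simplify in H0; lra.
  - intros [Hx Hz]. split; auto. intros w Hw. rewrite !disp_dg; auto.
    apply acosh_le. apply KG_ge1; auto. rewrite nu_zero by auto.
    pose proof (K1_pos l Hl Hll). pose proof (nu_ge0 w Hw). nra.
Qed.

Open Scope R_scope.

Lemma nu_BV (B : M2) (u : R) : SL2 B -> 0 < u ->
  nu (act B (Vpt u)) = n2 (mb B) * n2 (md B) / u ^ 2
     + 2 * fst (Cmult (Cmult (mb B) (Cconj (md B))) (Cmult (Cconj (ma B)) (mc B)))
     + n2 (ma B) * n2 (mc B) * u ^ 2.
Proof.
  intros HB Hu.
  assert (Hx : inH3 (Vpt u)) by (unfold inH3, Vpt; simpl; lra).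
  pose proof (den_pos B _ HB Hx) as Hd.
  destruct B as [[a1 a2] [b1 b2] [c1 c2] [d1 d2]].
  unfold nu, act, Vpt in *; rewrite !Cmod2 in *. unfold n2. csimpl.
  field. split; apply Rgt_not_eq; lra.
Qed.

Lemma U_real (al ga u1 u2 : R) : 0 <= al -> 0 <= ga -> 0 < u1 -> 0 < u2 ->
  (forall u, 0 < u -> al / u1 ^ 2 + ga * u1 ^ 2 <= al / u ^ 2 + ga * u ^ 2) ->
  (forall u, 0 < u -> al / u2 ^ 2 + ga * u2 ^ 2 <= al / u ^ 2 + ga * u ^ 2) ->
  u1 = u2 \/ (al = 0 /\ ga = 0).
Proof.
  intros Hal Hga Hu1 Hu2 H1 H2.
  destruct (Req_dec al 0) as [Ha0|Ha0].
  - right. split; auto. subst al.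
    specialize (H1 (u1 / 2)). assert (0 < u1 / 2) by lra. specialize (H1 H).
    destruct (Req_dec ga 0); auto. exfalso.
    assert (0 < ga) by lra. assert (0 < u1 ^ 2) by nra.
    replace (0 / u1 ^ 2 + ga * u1 ^ 2) with (ga * u1 ^ 2) in H1 by (field; lra).
    replace (0 / (u1 / 2) ^ 2 + ga * (u1 / 2) ^ 2) with (ga * u1 ^ 2 / 4) in H1 by (field; lra).
    nra.
  - left. assert (0 < al) by lra.
    set (m := (u1 ^ 2 + u2 ^ 2) / 2).
    assert (Hm : 0 < m) by (unfold m; nra).
    pose proof (sqrt_lt_R0 m Hm) as Hsm.
    assert (Hsm2 : sqrt m ^ 2 = m) by (apply pow2_sqrt; lra).
    pose proof (H1 _ Hsm) as A1. pose proof (H2 _ Hsm) as A2.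
    pose proof (H1 _ Hu2) as B1. pose proof (H2 _ Hu1) as B2.
    rewrite Hsm2 in A1, A2.
    set (U1 := u1 ^ 2) in *. set (U2 := u2 ^ 2) in *.
    assert (0 < U1) by (unfold U1; nra). assert (0 < U2) by (unfold U2; nra).
    assert (E : al / U1 + al / U2 <= 2 * (al / m)).
    { assert (ga * m * 2 = ga * U1 + ga * U2) by (unfold m; field). lra. }
    assert (E2 : al / U1 + al / U2 - 2 * (al / m) = al * (U1 - U2) ^ 2 / (U1 * U2 * (U1 + U2))).
    { unfold m. field. repeat split; apply Rgt_not_eq; lra. }
    assert (0 <= al * (U1 - U2) ^ 2 / (U1 * U2 * (U1 + U2)) -> U1 = U2).
    { intros _. destruct (Req_dec U1 U2); auto. exfalso.
      assert (0 < (U1 - U2) ^ 2) by (apply sq_pos; lra).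
      assert (0 < al * (U1 - U2) ^ 2 / (U1 * U2 * (U1 + U2))).
      { apply Rdiv_lt_0_compat. nra. apply Rmult_lt_0_compat; [nra|lra]. }
      lra. }
    assert (U1 = U2) by (apply H4; apply Rdiv_le_0_compat; [apply Rmult_le_pos; [lra|apply pow2_ge_0]|]; apply Rmult_lt_0_compat; [nra|lra]).
    unfold U1, U2 in H5. nra.
Qed.

Lemma RCS4 (x0 x1 x2 x3 y0 y1 y2 y3 : R) :
  x0 ^ 2 = 1 + x1 ^ 2 + x2 ^ 2 + x3 ^ 2 -> y0 ^ 2 = 1 + y1 ^ 2 + y2 ^ 2 + y3 ^ 2 ->
  0 < x0 -> 0 < y0 ->
  1 <= x0 * y0 - (x1 * y1 + x2 * y2 + x3 * y3) /\
  (x0 * y0 - (x1 * y1 + x2 * y2 + x3 * y3) <= 1 -> x0 = y0 /\ x1 = y1 /\ x2 = y2 /\ x3 = y3).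
Proof.
  intros Hx Hy Hx0 Hy0.
  set (s := x1 * y1 + x2 * y2 + x3 * y3).
  set (a := x1 ^ 2 + x2 ^ 2 + x3 ^ 2). set (b := y1 ^ 2 + y2 ^ 2 + y3 ^ 2).
  assert (CS : a * b - s ^ 2 = (x1 * y2 - x2 * y1) ^ 2 + (x1 * y3 - x3 * y1) ^ 2 + (x2 * y3 - x3 * y2) ^ 2)
    by (unfold a, b, s; ring).
  assert (DD : a + b - 2 * s = (x1 - y1) ^ 2 + (x2 - y2) ^ 2 + (x3 - y3) ^ 2) by (unfold a, b, s; ring).
  assert (P1 : 0 <= a * b - s ^ 2).
  { rewrite CS. pose proof (pow2_ge_0 (x1 * y2 - x2 * y1)). pose proof (pow2_ge_0 (x1 * y3 - x3 * y1)).
    pose proof (pow2_ge_0 (x2 * y3 - x3 * y2)). lra. }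
  assert (P2 : 0 <= a + b - 2 * s).
  { rewrite DD. pose proof (pow2_ge_0 (x1 - y1)). pose proof (pow2_ge_0 (x2 - y2)).
    pose proof (pow2_ge_0 (x3 - y3)). lra. }
  assert (Sq : (x0 * y0) ^ 2 - (1 + s) ^ 2 = (a + b - 2 * s) + (a * b - s ^ 2)).
  { replace ((x0 * y0) ^ 2) with (x0 ^ 2 * y0 ^ 2) by ring. rewrite Hx, Hy. unfold a, b. ring. }
  assert (Pxy : 0 < x0 * y0) by (apply Rmult_lt_0_compat; lra).
  assert (G : 1 + s <= x0 * y0).
  { destruct (Rle_or_lt (1 + s) 0). lra. nra. }
  split. lra.
  intros Hle. fold s in Hle.
  assert (Eq : x0 * y0 = 1 + s) by lra.
  assert (Z : a + b - 2 * s = 0).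
  { assert ((x0 * y0) ^ 2 - (1 + s) ^ 2 = 0) by (rewrite Eq; ring). lra. }
  rewrite DD in Z.
  pose proof (pow2_ge_0 (x1 - y1)). pose proof (pow2_ge_0 (x2 - y2)). pose proof (pow2_ge_0 (x3 - y3)).
  assert (E1 : x1 = y1) by nra. assert (E2 : x2 = y2) by nra. assert (E3 : x3 = y3) by nra.
  subst y1 y2 y3.
  assert (x0 ^ 2 = y0 ^ 2) by lra.
  split; [nra | auto].
Qed.

(* hyperboloid coordinates *)
Definition hv0 (x : H3pt) := (hP x + hQ x) / 2.
Definition hv3 (x : H3pt) := (hP x - hQ x) / 2.
Definition hv1 (x : H3pt) := fst (hW x).
Definition hv2 (x : H3pt) := snd (hW x).

Lemma hv_unit (x : H3pt) : inH3 x -> hv0 x ^ 2 = 1 + hv1 x ^ 2 + hv2 x ^ 2 + hv3 x ^ 2.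
Proof.
  destruct x as [[z1 z2] t]. unfold inH3, hv0, hv1, hv2, hv3, hP, hQ, hW, n2; simpl. intros Ht.
  field. apply Rgt_not_eq; lra.
Qed.

Lemma hv0_pos (x : H3pt) : inH3 x -> 0 < hv0 x.
Proof.
  destruct x as [[z1 z2] t]. unfold inH3, hv0, hP, hQ, n2; simpl. intros Ht.
  assert (0 < / t) by (apply Rinv_0_lt_compat; lra).
  assert (0 <= (z1 * (z1 * 1) + z2 * (z2 * 1) + t * (t * 1)) / t) by (apply Rdiv_le_0_compat; nra).
  lra.
Qed.

Lemma cosh_rho_hv (x y : H3pt) : inH3 x -> inH3 y ->
  cosh_rho x y = hv0 x * hv0 y - (hv1 x * hv1 y + hv2 x * hv2 y + hv3 x * hv3 y).
Proof.
  intros Hx Hy. rewrite cosh_rho_Bf by auto. unfold Bf, hv0, hv1, hv2, hv3. field.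
Qed.

Lemma hv_inj (x y : H3pt) : inH3 x -> inH3 y -> hv0 x = hv0 y -> hv1 x = hv1 y -> hv2 x = hv2 y ->
  hv3 x = hv3 y -> x = y.
Proof.
  intros Hx Hy E0 E1 E2 E3. apply rep_inj; auto.
  - unfold hv0, hv3 in *. lra.
  - unfold hv1, hv2 in *. destruct (hW x), (hW y). simpl in *. subst. reflexivity.
Qed.

Lemma Anti (x m y1 y2 : H3pt) : inH3 x -> inH3 m -> inH3 y1 -> inH3 y2 ->
  cosh_rho m y1 <= cosh_rho x m -> cosh_rho m y2 <= cosh_rho x m ->
  2 * (cosh_rho x m) ^ 2 - 1 <= cosh_rho x y1 ->
  2 * (cosh_rho x m) ^ 2 - 1 <= cosh_rho x y2 -> y1 = y2.
Proof.
  intros Hx Hm Hy1 Hy2 A1 A2 B1 B2.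
  pose proof (cosh_rho_ge1 x m Hx Hm) as HC.
  set (Cc := cosh_rho x m) in *.
  assert (HCe : Cc = hv0 x * hv0 m - (hv1 x * hv1 m + hv2 x * hv2 m + hv3 x * hv3 m))
    by (unfold Cc; apply cosh_rho_hv; auto).
  set (z0 := 2 * Cc * hv0 m - hv0 x). set (z1 := 2 * Cc * hv1 m - hv1 x).
  set (z2 := 2 * Cc * hv2 m - hv2 x). set (z3 := 2 * Cc * hv3 m - hv3 x).
  pose proof (hv_unit x Hx) as Ux. pose proof (hv_unit m Hm) as Um.
  pose proof (hv_unit y1 Hy1) as Uy1. pose proof (hv_unit y2 Hy2) as Uy2.
  pose proof (hv0_pos x Hx). pose proof (hv0_pos m Hm). pose proof (hv0_pos y1 Hy1). pose proof (hv0_pos y2 Hy2).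
  assert (Nm : hv0 m ^ 2 - (hv1 m ^ 2 + hv2 m ^ 2 + hv3 m ^ 2) = 1) by lra.
  assert (Nx : hv0 x ^ 2 - (hv1 x ^ 2 + hv2 x ^ 2 + hv3 x ^ 2) = 1) by lra.
  assert (Uz : z0 ^ 2 = 1 + z1 ^ 2 + z2 ^ 2 + z3 ^ 2).
  { assert (z0 ^ 2 - (z1 ^ 2 + z2 ^ 2 + z3 ^ 2) =
      4 * Cc ^ 2 * (hv0 m ^ 2 - (hv1 m ^ 2 + hv2 m ^ 2 + hv3 m ^ 2))
      - 4 * Cc * (hv0 x * hv0 m - (hv1 x * hv1 m + hv2 x * hv2 m + hv3 x * hv3 m))
      + (hv0 x ^ 2 - (hv1 x ^ 2 + hv2 x ^ 2 + hv3 x ^ 2))) by (unfold z0, z1, z2, z3; ring).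
    rewrite Nm, Nx, <- HCe in H3. lra. }
  assert (Zm : z0 * hv0 m - (z1 * hv1 m + z2 * hv2 m + z3 * hv3 m) = Cc).
  { assert (z0 * hv0 m - (z1 * hv1 m + z2 * hv2 m + z3 * hv3 m) =
      2 * Cc * (hv0 m ^ 2 - (hv1 m ^ 2 + hv2 m ^ 2 + hv3 m ^ 2))
      - (hv0 x * hv0 m - (hv1 x * hv1 m + hv2 x * hv2 m + hv3 x * hv3 m))) by (unfold z0, z1, z2, z3; ring).
    rewrite Nm, <- HCe in H3. lra. }
  assert (Hz0 : 0 < z0).
  { destruct (Rlt_or_le 0 z0); auto. exfalso.
    assert (z0 ^ 2 >= 1) by nra.
    assert (z0 < 0) by (destruct (Req_dec z0 0); [subst; nra|lra]).
    destruct (RCS4 (- z0) (- z1) (- z2) (- z3) (hv0 m) (hv1 m) (hv2 m) (hv3 m)) as [R _]; try nra. }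
  assert (Key : forall y, inH3 y -> cosh_rho m y <= Cc -> 2 * Cc ^ 2 - 1 <= cosh_rho x y ->
            hv0 y = z0 /\ hv1 y = z1 /\ hv2 y = z2 /\ hv3 y = z3).
  { intros y Hy Ay By.
    rewrite cosh_rho_hv in Ay, By by auto.
    pose proof (hv_unit y Hy). pose proof (hv0_pos y Hy).
    destruct (RCS4 (hv0 y) (hv1 y) (hv2 y) (hv3 y) z0 z1 z2 z3) as [_ R]; auto.
    apply R.
    assert (hv0 y * z0 - (hv1 y * z1 + hv2 y * z2 + hv3 y * z3) =
      2 * Cc * (hv0 m * hv0 y - (hv1 m * hv1 y + hv2 m * hv2 y + hv3 m * hv3 y))
      - (hv0 x * hv0 y - (hv1 x * hv1 y + hv2 x * hv2 y + hv3 x * hv3 y))) by (unfold z0, z1, z2, z3; ring).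
    rewrite H5.
    set (L := hv0 m * hv0 y - (hv1 m * hv1 y + hv2 m * hv2 y + hv3 m * hv3 y)) in *.
    assert (Cc * (Cc - L) >= 0) by (apply Rle_ge; apply Rmult_le_pos; lra).
    nra. }
  destruct (Key y1 Hy1 A1 B1) as [e0 [e1 [e2 e3]]].
  destruct (Key y2 Hy2 A2 B2) as [f0 [f1 [f2 f3]]].
  apply hv_inj; auto; congruence.
Qed.

From Stdlib Require Import Nsatz.
Open Scope R_scope.

Lemma fixO_aux (a1 a2 b1 b2 c1 c2 d1 d2 : R) :
  a1 * d1 - a2 * d2 - (b1 * c1 - b2 * c2) = 1 ->
  a1 * d2 + a2 * d1 - (b1 * c2 + b2 * c1) = 0 ->
  d1 ^ 2 + d2 ^ 2 + c1 ^ 2 + c2 ^ 2 = 1 ->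
  b1 * d1 + b2 * d2 + (a1 * c1 + a2 * c2) = 0 ->
  b2 * d1 - b1 * d2 + (a2 * c1 - a1 * c2) = 0 ->
  a1 = d1 /\ a2 = - d2.
Proof.
  intros H1 H2 H3 H4 H5. split.
  - assert (a1 - d1 = (c1 * (b1 * d1 + b2 * d2 + (a1 * c1 + a2 * c2)) - c2 * (b2 * d1 - b1 * d2 + (a2 * c1 - a1 * c2)))
       + a1 * (1 - (d1 ^ 2 + d2 ^ 2 + c1 ^ 2 + c2 ^ 2)) - (d1 * (1 - (a1 * d1 - a2 * d2 - (b1 * c1 - b2 * c2)))
          - d2 * (a1 * d2 + a2 * d1 - (b1 * c2 + b2 * c1)))) by ring.
    rewrite H1, H2, H3, H4, H5 in H. lra.
  - assert (a2 + d2 = (c1 * (b2 * d1 - b1 * d2 + (a2 * c1 - a1 * c2)) + c2 * (b1 * d1 + b2 * d2 + (a1 * c1 + a2 * c2)))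
       + a2 * (1 - (d1 ^ 2 + d2 ^ 2 + c1 ^ 2 + c2 ^ 2)) - (- d1 * (a1 * d2 + a2 * d1 - (b1 * c2 + b2 * c1))
          - d2 * (1 - (a1 * d1 - a2 * d2 - (b1 * c1 - b2 * c2))))) by ring.
    rewrite H1, H2, H3, H4, H5 in H. lra.
Qed.

Lemma fixO (U : M2) : SL2 U -> act U (Vpt 1) = Vpt 1 ->
  Im (trace U) = 0 /\ Re (trace U) ^ 2 <= 4.
Proof.
  intros HU E.
  assert (Hx : inH3 (Vpt 1)) by (unfold inH3, Vpt; simpl; lra).
  pose proof (den_pos U _ HU Hx) as Hd.
  destruct U as [[a1 a2] [b1 b2] [c1 c2] [d1 d2]].
  unfold SL2, det in HU. unfold act, Vpt, trace in *. rewrite !Cmod2 in *. csimpl.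
  injection HU; intros H2 H1; clear HU.
  injection E; intros E3 E2 E1; clear E.
  assert (HZ : forall Z, 1 / Z = 1 -> Z = 1).
  { intros Z HZ. destruct (Req_dec Z 0). subst. unfold Rdiv in HZ. rewrite Rinv_0 in HZ. lra.
    assert (Z * (1 / Z) = 1) by (field; auto). rewrite HZ in H0. lra. }
  apply HZ in E3. rewrite E3, Rinv_1 in E1, E2.
  destruct (fixO_aux a1 a2 b1 b2 c1 c2 d1 d2) as [F1 F2]; try lra.
  subst a1 a2. split. lra.
  assert (d1 ^ 2 <= 1) by nra. nra.
Qed.

Ltac nzero := repeat match goal with |- _ /\ _ => split | |- _ <> 0 => apply Rgt_not_eq end; try lra; try nra.

Definition Tm (x : H3pt) : M2 :=
  mkM2 (RtoC (sqrt (snd x))) (Cmult (RtoC (/ sqrt (snd x))) (fst x)) (RtoC 0) (RtoC (/ sqrt (snd x))).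

Lemma Tm_spec (x : H3pt) : inH3 x -> SL2 (Tm x) /\ act (Tm x) (Vpt 1) = x.
Proof.
  destruct x as [[z1 z2] t]. unfold inH3; simpl. intros Ht.
  pose proof (sqrt_lt_R0 t Ht) as Hs.
  pose proof (sqrt_sqrt t (Rlt_le _ _ Ht)) as Hss.
  unfold SL2, det, Tm, act, Vpt. rewrite !Cmod2. csimpl.
  set (s := sqrt t) in *. clearbody s. subst t. split.
  - f_equal; field; nzero.
  - apply injective_projections; cbn [fst snd]; [apply injective_projections; cbn [fst snd]|]; field; nzero.
Qed.

Lemma trace_conj (T A : M2) : SL2 T -> trace (mmul (minv T) (mmul A T)) = trace A.
Proof.
  intros HT. transitivity (Cmult (det T) (trace A)).
  - destruct A as [[a1 a2] [b1 b2] [c1 c2] [d1 d2]]; destruct T as [[e1 e2] [f1 f2] [g1 g2] [h1 h2]].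
    unfold trace, det, minv, mmul. csimpl. f_equal; ring.
  - unfold SL2 in HT. rewrite HT. destruct (trace A). unfold RtoC. csimpl. f_equal; ring.
Qed.

Lemma Fix (A : M2) (x : H3pt) : SL2 A -> inH3 x -> act A x = x ->
  Im (trace A) = 0 /\ Re (trace A) ^ 2 <= 4.
Proof.
  intros HA Hx E. destruct (Tm_spec x Hx) as [HT HTx].
  rewrite <- (trace_conj (Tm x) A HT). apply fixO.
  - apply SL2_mul. apply SL2_minv; auto. apply SL2_mul; auto.
  - assert (H1 : inH3 (Vpt 1)) by (unfold inH3, Vpt; simpl; lra).
    rewrite act_comp; [| apply SL2_minv; auto | apply SL2_mul; auto | auto].
    rewrite act_comp; auto. rewrite HTx, E. rewrite <- HTx at 2. apply act_inv_l; auto.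
Qed.

Lemma trace_sq (h : M2) : SL2 h -> trace (mmul h h) = Cminus (Cmult (trace h) (trace h)) (RtoC 2).
Proof.
  intros Hh. transitivity (Cminus (Cmult (trace h) (trace h)) (Cmult (RtoC 2) (det h))).
  - destruct h as [[a1 a2] [b1 b2] [c1 c2] [d1 d2]]. unfold trace, mmul, det. csimpl. f_equal; ring.
  - unfold SL2 in Hh. rewrite Hh. unfold RtoC. csimpl. f_equal; ring.
Qed.

Lemma lox_no_fix2 (h : M2) (x : H3pt) : SL2 h -> loxodromic h -> inH3 x ->
  act (mmul h h) x <> x.
Proof.
  intros Hh Hl Hx E. apply Fix in E; [| apply SL2_mul; auto | auto].
  rewrite trace_sq in E by auto.
  apply Hl. destruct (Cmult (trace h) (trace h)) as [s1 s2].
  unfold Im, Re, RtoC in *. csimpl. destruct E as [E1 E2]. split. lra.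
  split; nra.
Qed.

Lemma lox_trace_nz (h : M2) : loxodromic h -> trace h <> RtoC 0.
Proof.
  intros Hl E. apply Hl. rewrite E. unfold RtoC. csimpl. split. ring. split; lra.
Qed.

Open Scope R_scope.

Lemma disp_conj (T B B' : M2) (x : H3pt) : SL2 T -> SL2 B ->
  (forall y, inH3 y -> act B' (act T y) = act T (act B y)) -> inH3 x ->
  disp B' (act T x) = disp B x.
Proof.
  intros HT HB H Hx. unfold disp. rewrite H by auto. apply rho_inv; auto. apply act_H3; auto.
Qed.

Lemma axis_conj (T B B' : M2) (x : H3pt) : SL2 T -> SL2 B ->
  (forall y, inH3 y -> act B' (act T y) = act T (act B y)) -> inH3 x ->
  (axis B x <-> axis B' (act T x)).
Proof.
  intros HT HB H Hx. split.
  - intros [_ Hm]. split. apply act_H3; auto. intros w Hw.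
    rewrite <- (act_inv_r T w) by auto.
    rewrite !(disp_conj T B B') by (auto; apply act_H3; auto using SL2_minv).
    apply Hm. apply act_H3; auto using SL2_minv.
  - intros [_ Hm]. split; auto. intros w Hw.
    rewrite <- !(disp_conj T B B') by auto. apply Hm. apply act_H3; auto.
Qed.

Lemma f_act (g h : M2) (y : H3pt) : SL2 g -> SL2 h -> inH3 y ->
  act (mmul (minv h) (mmul g h)) y = act (minv h) (act g (act h y)).
Proof.
  intros Hg Hh Hy. rewrite act_comp; auto using SL2_minv, SL2_mul. rewrite act_comp; auto.
Qed.

Lemma k_act (g h : M2) (y : H3pt) : SL2 g -> SL2 h -> inH3 y ->
  act (mmul h (mmul g (minv h))) y = act h (act g (act (minv h) y)).
Proof.
  intros Hg Hh Hy. rewrite act_comp; auto using SL2_minv, SL2_mul. rewrite act_comp; auto using SL2_minv.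
Qed.

Lemma f_conj (g h : M2) : SL2 g -> SL2 h ->
  forall y, inH3 y -> act (mmul (minv h) (mmul g h)) (act (minv h) y) = act (minv h) (act g y).
Proof.
  intros Hg Hh y Hy. rewrite f_act; auto. rewrite act_inv_r; auto. apply act_H3; auto using SL2_minv.
Qed.

Lemma k_conj (g h : M2) : SL2 g -> SL2 h ->
  forall y, inH3 y -> act (mmul h (mmul g (minv h))) (act h y) = act h (act g y).
Proof.
  intros Hg Hh y Hy. rewrite k_act; auto. rewrite act_inv_l; auto. apply act_H3; auto.
Qed.

Lemma n2_opp (x : C) : n2 (Copp x) = n2 x.
Proof. destruct x. unfold n2, Copp; simpl. ring. Qed.

Lemma n2_prod0 (x y : C) : n2 x * n2 y = 0 -> x = RtoC 0 \/ y = RtoC 0.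
Proof.
  intros H. apply Rmult_integral in H. destruct H; [left|right]; apply n2_zero; lra.
Qed.

Lemma exc_diag (l : C) (h : M2) : SL2 h -> loxodromic h -> ~ pcommute (dg l) h ->
  ((mb h = RtoC 0 /\ mc h = RtoC 0) \/ (ma h = RtoC 0 /\ md h = RtoC 0)) -> False.
Proof.
  intros Hh Hl nc [[Hb Hc]|[Ha Hd]].
  - apply nc. left. destruct h as [a b c d]; simpl in *; subst.
    unfold dg, mmul, Cinv'. destruct l, a, d. unfold RtoC. csimpl. f_equal; f_equal; ring.
  - apply (lox_trace_nz h Hl). destruct h as [a b c d]; simpl in *; subst.
    unfold trace; simpl. unfold RtoC. csimpl. f_equal; ring.
Qed.

Lemma det0_contra (h : M2) : SL2 h -> (ma h = RtoC 0 \/ md h = RtoC 0) ->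
  (mb h = RtoC 0 \/ mc h = RtoC 0) -> False.
Proof.
  intros Hh H1 H2. unfold SL2, det in Hh.
  destruct h as [[a1 a2] [b1 b2] [c1 c2] [d1 d2]]; simpl in *. unfold RtoC in *. csimpl.
  injection Hh; intros E2 E1; clear Hh.
  destruct H1 as [H1|H1]; injection H1; intros; subst;
  destruct H2 as [H2|H2]; injection H2; intros; subst; lra.
Qed.

Open Scope R_scope.

Lemma Vpt_eta (y : H3pt) : fst y = RtoC 0 -> y = Vpt (snd y).
Proof. destruct y; simpl; intros; subst; reflexivity. Qed.

Lemma Vpt_H3 (u : R) : 0 < u -> inH3 (Vpt u).
Proof. unfold inH3, Vpt; simpl; auto. Qed.

Lemma sq_le (a b : R) : 0 <= a -> 0 <= b -> a ^ 2 <= b ^ 2 -> a <= b.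
Proof. intros. nra. Qed.

Lemma n2_ge0 (x : C) : 0 <= n2 x.
Proof. unfold n2. pose proof (pow2_ge_0 (fst x)). pose proof (pow2_ge_0 (snd x)). lra. Qed.

Lemma Copp0 (x : C) : Copp x = RtoC 0 -> x = RtoC 0.
Proof. destruct x. unfold Copp, RtoC; simpl. intro H; injection H; intros. f_equal; lra. Qed.

Theorem main_diag (l : C) (h : M2) (Hl : 0 < n2 l) (Hll : Cmult l l <> RtoC 1)
  (Hh : SL2 h) (lox_h : loxodromic h) (nc : ~ pcommute (dg l) h)
  (p q z0 : H3pt)
  (Hp : axis (dg l) p) (Hq : axis (mmul (minv h) (mmul (dg l) h)) q)
  (Hshortest : forall p' q', axis (dg l) p' -> axis (mmul (minv h) (mmul (dg l) h)) q' ->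
                 rho p q <= rho p' q')
  (Hz0 : inH3 z0)
  (Hmid : rho p z0 = rho p q / 2 /\ rho z0 q = rho p q / 2) :
  disp (dg l) z0 < disp (mmul h (mmul (dg l) (minv h))) z0.
Proof.
  set (g := dg l) in *.
  set (hi := minv h).
  set (f := mmul (minv h) (mmul g h)) in *.
  assert (Hg : SL2 g) by (apply SL2_dg; auto).
  assert (Hhi : SL2 hi) by (apply SL2_minv; auto).
  assert (AxV : forall y, axis g y <-> inH3 y /\ fst y = RtoC 0) by (intros; apply axis_dg; auto).
  assert (AxVpt : forall u, 0 < u -> axis g (Vpt u)) by (intros; apply AxV; split; [apply Vpt_H3|]; auto).
  assert (Axf : forall y, inH3 y -> (axis g y <-> axis f (act hi y))).
  { intros y Hy. apply (axis_conj hi g f); auto. apply f_conj; auto. }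
  assert (Axf' : forall y, axis f y -> axis g (act h y)).
  { intros y Hyf. assert (Hy : inH3 y) by (destruct Hyf; auto).
    apply Axf. apply act_H3; auto. unfold hi. rewrite act_inv_l; auto. }
  assert (Hact : forall x, inH3 x -> inH3 (act h x)) by (intros; apply act_H3; auto).
  assert (Hacti : forall x, inH3 x -> inH3 (act hi x)) by (intros; apply act_H3; auto).
  assert (chi : forall x y, inH3 x -> inH3 y -> cosh_rho (act h x) (act h y) = cosh_rho x y)
    by (intros; apply cosh_rho_inv; auto).
  assert (chii : forall x y, inH3 x -> inH3 y -> cosh_rho (act hi x) (act hi y) = cosh_rho x y)
    by (intros; apply cosh_rho_inv; auto).
  assert (hhi : forall x, inH3 x -> act h (act hi x) = x) by (intros; apply act_inv_r; auto).
  assert (hih : forall x, inH3 x -> act hi (act h x) = x) by (intros; apply act_inv_l; auto).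
  destruct (proj1 (AxV p) Hp) as [Hp3 Hp0].
  assert (Hq3 : inH3 q) by (destruct Hq; auto).
  set (tp := snd p). assert (Htp : 0 < tp) by exact Hp3.
  assert (Ep : p = Vpt tp) by (apply Vpt_eta; auto).
  set (Cc := cosh_rho p z0).
  assert (HC1 : 1 <= Cc) by (apply cosh_rho_ge1; auto).
  destruct Hmid as [M1 M2].
  assert (Czq : cosh_rho z0 q = Cc).
  { assert (rho z0 q = rho p z0) by lra. unfold rho in H. fold Cc in H.
    apply Rle_antisym; apply acosh_le_inv; try apply cosh_rho_ge1; auto; lra. }
  assert (Cpq : cosh_rho p q = 2 * Cc ^ 2 - 1).
  { apply acosh_double; try apply cosh_rho_ge1; auto. unfold rho in M1. fold Cc in M1. lra. }
  set (Dc := cosh_rho p q) in *.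
  assert (HD1 : 1 <= Dc) by (apply cosh_rho_ge1; auto).
  assert (HS : forall p' q', axis g p' -> axis f q' -> Dc <= cosh_rho p' q').
  { intros p' q' H1 H2. apply acosh_le_inv; try apply cosh_rho_ge1; auto.
    destruct H1; auto. destruct H2; auto. apply Hshortest; auto. }
  set (w := act hi z0). assert (Hw : inH3 w) by (apply Hacti; auto).
  assert (Ez0 : z0 = act h w) by (unfold w; rewrite hhi; auto).
  assert (Dk : disp (mmul h (mmul g hi)) z0 = disp g w).
  { rewrite Ez0. apply (disp_conj h g); auto. apply k_conj; auto. }
  rewrite Dk.
  destruct (Rlt_or_le (nu z0) (nu w)) as [Hlt|Hle].
  { apply disp_dg_lt; auto. }
  exfalso.
  assert (Ha : 1 + nu z0 <= Cc ^ 2).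
  { destruct (V3 z0 tp Hz0 Htp) as [_ V]. rewrite <- Ep, cosh_rho_sym in V. exact V. }
  destruct (foot_spec w Hw) as [Hys [Hys0 [Hyc Hyc2]]].
  set (ys := foot w) in *.
  assert (Cwys : cosh_rho w ys <= Cc) by (apply sq_le; lra).
  set (c' := act h ys).
  assert (Hc'3 : inH3 c') by (apply Hact; auto).
  assert (Cz0c : cosh_rho z0 c' <= Cc) by (rewrite Ez0; unfold c'; rewrite chi; auto).
  assert (Cpc : Dc <= cosh_rho p c').
  { assert (Dc <= cosh_rho ys (act hi p)).
    { apply HS. apply AxV; auto. apply Axf; auto. }
    rewrite <- chi in H by auto. rewrite hhi in H by auto. fold c' in H. rewrite cosh_rho_sym. exact H. }
  assert (Ec : c' = q).
  { apply (Anti p z0 c' q); auto; fold Cc; fold Dc; try lra. }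
  assert (Ehiq : act hi q = ys) by (rewrite <- Ec; unfold c'; apply hih; auto).
  assert (Hhq : axis g (act h q)) by (apply Axf'; auto).
  destruct (proj1 (AxV _) Hhq) as [Hhq3 Hhq0].
  set (u2 := snd (act h q)). assert (Hu2 : 0 < u2) by exact Hhq3.
  assert (Ehq : act h q = Vpt u2) by (apply Vpt_eta; auto).
  set (u1 := snd ys). assert (Hu1 : 0 < u1) by exact Hys.
  assert (Eys : ys = Vpt u1) by (apply Vpt_eta; auto).
  assert (Eq1 : q = act h (Vpt u1)) by (rewrite <- Eys, <- Ec; reflexivity).
  assert (Eq2 : q = act hi (Vpt u2)) by (rewrite <- Ehq; rewrite hih; auto).
  assert (G1 : forall u, 0 < u -> Dc ^ 2 <= 1 + nu (act h (Vpt u))).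
  { intros u Hu. set (y := act h (Vpt u)). assert (Hy : inH3 y) by (apply Hact; apply Vpt_H3; auto).
    destruct (foot_spec y Hy) as [Hf3 [Hf0 [Hfc Hfc2]]].
    assert (Dc <= cosh_rho (Vpt u) (act hi (foot y))).
    { apply HS. apply AxVpt; auto. apply Axf; auto. apply AxV; auto. }
    rewrite <- chi in H by (auto using Vpt_H3). rewrite hhi in H by auto. fold y in H.
    rewrite <- Hfc2. assert (0 <= Dc) by lra. nra. }
  assert (Gq : 1 + nu q <= Dc ^ 2).
  { destruct (V3 q tp Hq3 Htp) as [_ V]. rewrite <- Ep, cosh_rho_sym in V. exact V. }
  assert (Ghp : 1 + nu (act h (Vpt tp)) <= Dc ^ 2).
  { destruct (V3 (act h (Vpt tp)) u2 (Hact _ (Vpt_H3 _ Htp)) Hu2) as [_ V].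
    rewrite <- Ehq, chi, <- Ep in V by auto. fold Dc in V. rewrite <- Ep. exact V. }
  assert (G2 : forall u, 0 < u -> Dc ^ 2 <= 1 + nu (act hi (Vpt u))).
  { intros u Hu. set (y := act hi (Vpt u)). assert (Hy : inH3 y) by (apply Hacti; apply Vpt_H3; auto).
    destruct (foot_spec y Hy) as [Hf3 [Hf0 [Hfc Hfc2]]].
    assert (Dc <= cosh_rho (foot y) y).
    { apply HS. apply AxV; auto. apply Axf; auto using Vpt_H3. }
    rewrite cosh_rho_sym in H.
    rewrite <- Hfc2. assert (0 <= Dc) by lra. nra. }
  assert (Ghip : 1 + nu (act hi (Vpt tp)) <= Dc ^ 2).
  { destruct (V3 (act hi (Vpt tp)) u1 (Hacti _ (Vpt_H3 _ Htp)) Hu1) as [_ V].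
    rewrite <- Eys, <- Ehiq, chii, <- Ep in V by auto. fold Dc in V. rewrite <- Ep. exact V. }
  assert (U1 : u1 = tp \/ (n2 (mb h) * n2 (md h) = 0 /\ n2 (ma h) * n2 (mc h) = 0)).
  { apply U_real; auto; try (apply Rmult_le_pos; apply n2_ge0).
    - intros u Hu. pose proof (G1 u Hu). rewrite Eq1 in Gq.
      rewrite !nu_BV in *; auto. lra.
    - intros u Hu. pose proof (G1 u Hu).
      rewrite !nu_BV in *; auto. lra. }
  assert (U2 : u2 = tp \/ (n2 (mb hi) * n2 (md hi) = 0 /\ n2 (ma hi) * n2 (mc hi) = 0)).
  { apply U_real; auto; try (apply Rmult_le_pos; apply n2_ge0).
    - intros u Hu. pose proof (G2 u Hu). rewrite Eq2 in Gq.
      rewrite !nu_BV in *; auto. lra.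
    - intros u Hu. pose proof (G2 u Hu).
      rewrite !nu_BV in *; auto. lra. }
  destruct U1 as [E1|[Ea Eb]].
  - destruct U2 as [E2|[Ea Eb]].
    + assert (Eqp : q = act h p) by (rewrite Eq1, E1, Ep; reflexivity).
      assert (Ehqp : act h q = p) by (rewrite Ehq, E2, Ep; reflexivity).
      apply (lox_no_fix2 h p Hh lox_h Hp3). rewrite act_comp by auto. rewrite <- Eqp. exact Ehqp.
    + unfold hi, minv in Ea, Eb; simpl in Ea, Eb. rewrite n2_opp in Ea, Eb.
      apply n2_prod0 in Ea. apply n2_prod0 in Eb.
      destruct Ea as [Ea|Ea]; destruct Eb as [Eb|Eb].
      * apply (det0_contra h Hh); auto.
      * apply (exc_diag l h Hh lox_h nc); auto.
      * apply (exc_diag l h Hh lox_h nc); auto.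
      * apply (det0_contra h Hh); auto.
  - apply n2_prod0 in Ea. apply n2_prod0 in Eb.
    destruct Ea as [Ea|Ea]; destruct Eb as [Eb|Eb].
    * apply (det0_contra h Hh); auto.
    * apply (exc_diag l h Hh lox_h nc); auto.
    * apply (exc_diag l h Hh lox_h nc); auto.
    * apply (det0_contra h Hh); auto.
Qed.

Open Scope R_scope.

Definition csqrt (w : C) : C :=
  let r := sqrt (fst w ^ 2 + snd w ^ 2) in
  (sqrt ((r + fst w) / 2),
   if Rle_dec 0 (snd w) then sqrt ((r - fst w) / 2) else - sqrt ((r - fst w) / 2)).

Lemma csqrt_spec (w : C) : Cmult (csqrt w) (csqrt w) = w.
Proof.
  destruct w as [w1 w2]. unfold csqrt. simpl fst; simpl snd.
  set (r := sqrt (w1 ^ 2 + w2 ^ 2)).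
  assert (Hr : r ^ 2 = w1 ^ 2 + w2 ^ 2) by (apply pow2_sqrt; nra).
  assert (Hr0 : 0 <= r) by apply sqrt_pos.
  assert (H1 : 0 <= (r + w1) / 2) by nra.
  assert (H2 : 0 <= (r - w1) / 2) by nra.
  pose proof (sqrt_sqrt _ H1) as S1. pose proof (sqrt_sqrt _ H2) as S2.
  assert (Prod : sqrt ((r + w1) / 2) * sqrt ((r - w1) / 2) = Rabs (w2 / 2)).
  { rewrite <- sqrt_mult by auto.
    replace ((r + w1) / 2 * ((r - w1) / 2)) with ((w2 / 2) * (w2 / 2)) by nra.
    rewrite <- sqrt_Rsqr_abs. unfold Rsqr. reflexivity. }
  unfold Cmult. simpl fst; simpl snd.
  destruct (Rle_dec 0 w2) as [Hw|Hw].
  - rewrite Rabs_right in Prod by lra. f_equal.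
    + replace (sqrt ((r + w1) / 2) * sqrt ((r + w1) / 2)) with ((r + w1) / 2) by auto.
      replace (sqrt ((r - w1) / 2) * sqrt ((r - w1) / 2)) with ((r - w1) / 2) by auto. field.
    + replace (sqrt ((r - w1) / 2) * sqrt ((r + w1) / 2)) with (sqrt ((r + w1) / 2) * sqrt ((r - w1) / 2)) by ring.
      rewrite Prod. field.
  - rewrite Rabs_left in Prod by lra. f_equal.
    + replace (sqrt ((r + w1) / 2) * sqrt ((r + w1) / 2)) with ((r + w1) / 2) by auto.
      replace (- sqrt ((r - w1) / 2) * - sqrt ((r - w1) / 2)) with ((r - w1) / 2) by (rewrite <- S2 at 1; ring). field.
    + replace (sqrt ((r + w1) / 2) * - sqrt ((r - w1) / 2) + - sqrt ((r - w1) / 2) * sqrt ((r + w1) / 2))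
        with (- 2 * (sqrt ((r + w1) / 2) * sqrt ((r - w1) / 2))) by ring.
      rewrite Prod. field.
Qed.

Open Scope C_scope.

Lemma RtoC_neq (x y : R) : x <> y -> RtoC x <> RtoC y.
Proof. intros H E. injection E. auto. Qed.

Lemma RtoC_4 : RtoC 4 = RtoC 2 * RtoC 2.
Proof. unfold RtoC, Cmult; simpl. f_equal; ring. Qed.

Lemma root_exists (t : C) : t * t <> RtoC 4 -> exists l, l * l - t * l + 1 = 0 /\ l * l <> 1.
Proof.
  intros Ht.
  set (s := csqrt (t * t - RtoC 4)).
  assert (Hs : s * s = t * t - RtoC 4) by apply csqrt_spec.
  assert (H2 : RtoC 2 <> 0) by (apply RtoC_neq; lra).
  set (l := (t + s) / RtoC 2).
  assert (Q : l * l - t * l + 1 = 0).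
  { unfold l. rewrite RtoC_4 in Hs. field_simplify_eq; auto.
    replace (s ^ 2) with (s * s) by ring. rewrite Hs. ring. }
  exists l. split; auto.
  intro E. apply Ht. rewrite RtoC_4.
  assert (tl : t * l = RtoC 2).
  { assert (t * l = l * l + 1). { rewrite <- (Cplus_0_l (t * l)), <- Q. ring. }
    rewrite H, E. unfold RtoC, Cplus; simpl. f_equal; ring. }
  transitivity (t * t * (l * l)). rewrite E. ring.
  transitivity ((t * l) * (t * l)). ring. rewrite tl. reflexivity.
Qed.

Lemma root_sq1 (t l : C) : l * l - t * l + 1 = 0 -> l * l = 1 -> t * t = RtoC 4.
Proof.
  intros Q E. rewrite RtoC_4.
  assert (tl : t * l = RtoC 2).
  { assert (t * l = l * l + 1). { rewrite <- (Cplus_0_l (t * l)), <- Q. ring. }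
    rewrite H, E. unfold RtoC, Cplus; simpl. f_equal; ring. }
  transitivity (t * t * (l * l)). rewrite E. ring.
  transitivity ((t * l) * (t * l)). ring. rewrite tl. reflexivity.
Qed.

Lemma lox_t4 (g : M2) : loxodromic g -> trace g * trace g <> RtoC 4.
Proof.
  intros Hl E. apply Hl. rewrite E. unfold Im, Re, RtoC. simpl. split; [reflexivity|]. split; lra.
Qed.

Lemma Cinv'_eq (l : C) : Cinv' l = / l.
Proof. destruct l. unfold Cinv', Cinv, n2. reflexivity. Qed.

Lemma n2_pos' (l : C) : l <> 0 -> (0 < n2 l)%R.
Proof. intros. apply n2_pos. auto. Qed.

Ltac nzC := repeat split; auto;
  try match goal with H : ?l * ?l <> 1 |- _ => let E := fresh in intro E; change (l * l - 1 = 0) in E;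
        apply H; transitivity (1 + (l * l - 1)); [ring | rewrite E; ring] end.

Lemma diagonalize (g : M2) : SL2 g -> loxodromic g ->
  exists M l, SL2 M /\ (0 < n2 l)%R /\ l * l <> 1 /\ mmul (minv M) (mmul g M) = dg l.
Proof.
  intros Hg Hlox. pose proof (lox_t4 g Hlox) as Ht.
  destruct g as [a b c d]. unfold SL2, det, trace in *; simpl in *.
  destruct (root_exists (a + d) Ht) as [l [Q Hll]].
  assert (Hl0 : l <> 0).
  { intro E. rewrite E in Q. apply C1_nz. rewrite <- Q. ring. }
  destruct (Ceq_dec c 0) as [Hc|Hc].
  - subst c.
    assert (Had : a * d = 1) by (rewrite <- Hg; ring).
    assert (Ha0 : a <> 0) by (intro E; rewrite E in Had; apply C1_nz; rewrite <- Had; ring).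
    assert (Ed : d = / a) by (field_simplify_eq; auto; rewrite <- Had; ring).
    assert (Qa : a * a - (a + d) * a + 1 = 0) by (rewrite Ed; field; auto).
    assert (Haa : a * a <> 1) by (intro E; apply Ht; apply (root_sq1 _ a); auto).
    destruct (Ceq_dec b 0) as [Hb|Hb].
    + subst b. exists I2, a. split; [|split; [apply n2_pos'; auto|split; auto]].
      * unfold SL2, det, I2; simpl. ring.
      * unfold minv, mmul, I2, dg; simpl. rewrite Cinv'_eq, <- Ed. f_equal; ring.
    + assert (Hda : d - a <> 0).
      { intro E. apply Haa. assert (d = a) by (transitivity (a + (d - a)); [ring | rewrite E; ring]).
        rewrite H in Had. exact Had. }
      exists (mkM2 1 (b / (d - a)) 0 1), a. split; [|split; [apply n2_pos'; auto|split; auto]].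
      * unfold SL2, det; simpl. ring.
      * unfold minv, mmul, dg; simpl. rewrite Cinv'_eq, <- Ed. f_equal; field; auto.
  - assert (E1 : (a + d) * l = l * l + 1).
    { transitivity (l * l + 1 - (l * l - (a + d) * l + 1)); [ring | rewrite Q; ring]. }
    assert (Ed : d = l + / l - a).
    { transitivity ((a + d) * l * / l - a). field; auto. rewrite E1. field; auto. }
    assert (Eb : b = (a * d - 1) / c).
    { field_simplify_eq; auto. rewrite <- Hg. ring. }
    assert (Hs : l - / l <> 0).
    { intro E. apply Hll. assert (l = / l) by (transitivity (/ l + (l - / l)); [ring | rewrite E; ring]).
      rewrite H at 2. field; auto. }
    clear E1 Q Hg Ht Hlox. subst b. subst d.
    set (s := l - / l) in *.
    exists (mkM2 ((l - (l + / l - a)) / (c * s)) (/ l - (l + / l - a)) (/ s) c), l.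
    split; [|split; [apply n2_pos'; auto|split; auto]].
    + unfold SL2, det; simpl. unfold s. field. repeat split; auto. intro E. change (l * l - 1 = 0) in E. apply Hll. transitivity (1 + (l * l - 1)). ring. rewrite E. ring.
    + unfold minv, mmul, dg. change (Cinv' l) with (/ l). cbn [ma mb mc md]. unfold s in *. f_equal; field; repeat split; auto. all: intro E; change (l * l - 1 = 0) in E; apply Hll; transitivity (1 + (l * l - 1)); [ring | rewrite E; ring].
Qed.

Open Scope R_scope.

Definition relT (T B B' : M2) := forall y, inH3 y -> act B' (act T y) = act T (act B y).

Lemma relT_comp (T B1 B2 B1' B2' : M2) : SL2 T -> SL2 B1 -> SL2 B2 -> SL2 B1' -> SL2 B2' ->
  relT T B1 B1' -> relT T B2 B2' -> relT T (mmul B1 B2) (mmul B1' B2').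
Proof.
  intros HT H1 H2 H1' H2' R1 R2 y Hy.
  rewrite !act_comp; auto; try (apply act_H3; auto).
  rewrite R2 by auto. rewrite R1 by (apply act_H3; auto). reflexivity.
Qed.

Lemma relT_inv (T B B' : M2) : SL2 T -> SL2 B -> SL2 B' -> relT T B B' -> relT T (minv B) (minv B').
Proof.
  intros HT HB HB' R y Hy.
  set (w := act T (act (minv B) y)).
  assert (Hw : act B' w = act T y).
  { unfold w. rewrite R by (apply act_H3; auto using SL2_minv). rewrite act_inv_r; auto. }
  rewrite <- Hw. apply act_inv_l; auto. unfold w. apply act_H3; auto. apply act_H3; auto using SL2_minv.
Qed.

Lemma relT_conj (T B : M2) : SL2 T -> SL2 B -> relT (minv T) B (mmul (minv T) (mmul B T)).
Proof. intros HT HB y Hy. apply f_conj; auto. Qed.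

Lemma mmul_I2_l (A : M2) : mmul I2 A = A.
Proof. destruct A as [a b c d]. unfold mmul, I2; simpl. f_equal; ring. Qed.
Lemma mmul_I2_r (A : M2) : mmul A I2 = A.
Proof. destruct A as [a b c d]. unfold mmul, I2; simpl. f_equal; ring. Qed.

Lemma mopp_mul_l (A B : M2) : mmul (mopp A) B = mopp (mmul A B).
Proof. destruct A as [a b c d]; destruct B. unfold mmul, mopp; simpl. f_equal; ring. Qed.
Lemma mopp_mul_r (A B : M2) : mmul A (mopp B) = mopp (mmul A B).
Proof. destruct A as [a b c d]; destruct B. unfold mmul, mopp; simpl. f_equal; ring. Qed.

Lemma conj_mul (M X Y : M2) : SL2 M ->
  mmul (mmul (minv M) (mmul X M)) (mmul (minv M) (mmul Y M)) = mmul (minv M) (mmul (mmul X Y) M).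
Proof.
  intros HM.
  rewrite <- !mmul_assoc. f_equal. rewrite (mmul_assoc M (minv M)), minv_r, mmul_I2_l by auto. reflexivity.
Qed.

Lemma conj_back (M X : M2) : SL2 M -> mmul M (mmul (mmul (minv M) (mmul X M)) (minv M)) = X.
Proof.
  intros HM. rewrite !mmul_assoc. rewrite minv_r, mmul_I2_l by auto.
  rewrite <- mmul_assoc, minv_r, mmul_I2_r by auto. reflexivity.
Qed.

Lemma pcommute_conj (M X Y : M2) : SL2 M ->
  pcommute (mmul (minv M) (mmul X M)) (mmul (minv M) (mmul Y M)) -> pcommute X Y.
Proof.
  intros HM [E|E]; rewrite !conj_mul in E by auto; [left|right].
  - rewrite <- (conj_back M (mmul X Y)), <- (conj_back M (mmul Y X)), E by auto. reflexivity.
  - rewrite <- (conj_back M (mmul X Y)), <- (conj_back M (mmul Y X)) by auto. rewrite E.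
    rewrite mopp_mul_l, mopp_mul_r. reflexivity.
Qed.

Theorem lemma6p2 (g h : M2) (Hg : SL2 g) (Hh : SL2 h)
  (lox_g : loxodromic g) (lox_h : loxodromic h) (nc : ~ pcommute g h)
  (p q z0 : H3pt)
  (Hp : axis g p) (Hq : axis (mmul (minv h) (mmul g h)) q)
  (Hshortest : forall p' q', axis g p' -> axis (mmul (minv h) (mmul g h)) q' ->
                 rho p q <= rho p' q')
  (Hz0 : inH3 z0)
  (Hmid : rho p z0 = rho p q / 2 /\ rho z0 q = rho p q / 2) :
  disp g z0 < disp (mmul h (mmul g (minv h))) z0.
Proof.
  destruct (diagonalize g Hg lox_g) as [M [l [HM [Hl [Hll EM]]]]].
  set (Mi := minv M).
  assert (HMi : SL2 Mi) by (apply SL2_minv; auto).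
  set (h' := mmul Mi (mmul h M)).
  assert (Hh' : SL2 h') by (apply SL2_mul; auto; apply SL2_mul; auto).
  assert (Hhi : SL2 (minv h)) by (apply SL2_minv; auto).
  assert (Hhi' : SL2 (minv h')) by (apply SL2_minv; auto).
  assert (Hdg : SL2 (dg l)) by (apply SL2_dg; auto).
  assert (Rg : relT Mi g (dg l)) by (rewrite <- EM; apply relT_conj; auto).
  assert (Rh : relT Mi h h') by (apply relT_conj; auto).
  assert (Rhi : relT Mi (minv h) (minv h')) by (apply relT_inv; auto).
  set (f := mmul (minv h) (mmul g h)) in *.
  set (f' := mmul (minv h') (mmul (dg l) h')).
  assert (Hf : SL2 f) by (apply SL2_mul; [exact Hhi | apply SL2_mul; assumption]).
  assert (Hf' : SL2 f') by (apply SL2_mul; [exact Hhi' | apply SL2_mul; assumption]).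
  assert (Rf : relT Mi f f').
  { apply relT_comp; try assumption. apply SL2_mul; assumption. apply SL2_mul; assumption.
    apply relT_comp; assumption. }
  set (k := mmul h (mmul g (minv h))).
  set (k' := mmul h' (mmul (dg l) (minv h'))).
  assert (Hk : SL2 k) by (apply SL2_mul; [exact Hh | apply SL2_mul; assumption]).
  assert (Hk' : SL2 k') by (apply SL2_mul; [exact Hh' | apply SL2_mul; assumption]).
  assert (Rk : relT Mi k k').
  { apply relT_comp; try assumption. apply SL2_mul; assumption. apply SL2_mul; assumption.
    apply relT_comp; assumption. }
  assert (HMact : forall x, inH3 x -> inH3 (act Mi x)) by (intros; apply act_H3; auto).
  assert (Hp3 : inH3 p) by (destruct Hp; auto).
  assert (Hq3 : inH3 q) by (destruct Hq; auto).
  assert (rhoM : forall x y, inH3 x -> inH3 y -> rho (act Mi x) (act Mi y) = rho x y)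
    by (intros; apply rho_inv; auto).
  rewrite <- (disp_conj Mi g (dg l) z0), <- (disp_conj Mi k k' z0) by auto.
  refine (main_diag l h' Hl Hll Hh' _ _ (act Mi p) (act Mi q) (act Mi z0) _ _ _ _ _).
  - unfold loxodromic. unfold h'. unfold Mi. rewrite trace_conj by auto. exact lox_h.
  - intro E. apply nc. apply (pcommute_conj M). auto. rewrite EM. exact E.
  - apply (axis_conj Mi g (dg l)); auto.
  - apply (axis_conj Mi f f'); auto.
  - intros p'' q'' Ap Aq.
    assert (Hp'' : inH3 p'') by (destruct Ap; auto).
    assert (Hq'' : inH3 q'') by (destruct Aq; auto).
    rewrite <- (act_inv_r Mi p'') in Ap by auto. rewrite <- (act_inv_r Mi q'') in Aq by auto.
    rewrite <- (act_inv_r Mi p''), <- (act_inv_r Mi q'') by auto.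
    rewrite !rhoM by auto using act_H3, SL2_minv.
    apply Hshortest.
    + apply (axis_conj Mi g (dg l)); auto using act_H3, SL2_minv.
    + apply (axis_conj Mi f f'); auto using act_H3, SL2_minv.
  - auto.
  - rewrite !rhoM by auto. exact Hmid.
Qed.
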